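(* There exists a fully-dynamic bin packing algorithm with constant worst-case recourse under general movement costs which, given items all of whose sizes satisfy $s_i\in[1/k,1/(k-1))$ for some integer $k\ge1$, packs them into bins of which all but one contain $k-1$ items and are hence at least $1-1/k$ full. (If all items have size $1/k$, the algorithm packs $k$ items in all bins but one.)
   Context: Fully-dynamic bin packing: items (size $s_i$, arbitrary movement cost $c_i\ge0$) are inserted and deleted over time; the algorithm maintains a packing of the current items into unit bins, paying $c_i$ each time it moves item $i$. Worst-case recourse $\gamma$ means that at each update the total movement cost incurred is at most $\gamma\cdot c_t$, where $c_t$ is the movement cost of the item inserted or deleted at that update. *)

(* Defs.v *)
From HB Require Import structures.
From mathcomp Require Import all_boot all_order all_algebra.
Set Implicit Arguments. Unset Strict Implicit. Unset Printing Implicit Defensive.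
Import Order.TTheory GRing.Theory Num.Theory.
Local Open Scope ring_scope.

Section BinPacking.
Variable R : realFieldType.

(* An update: insert item with identifier [i], size [s] and movement cost [c],
   or delete the (currently present) item with identifier [i]. *)
Inductive update := Ins of nat & R & R | Del of nat.

Definition uid (u : update) : nat := match u with Ins i _ _ => i | Del i => i end.

Definition info (h : seq update) (i : nat) : option (R * R) :=
  foldl (fun o u => match u with
                    | Ins j s c => if j == i then Some (s, c) else o
                    | Del j => if j == i then None else o end) None h.

Definition present (h : seq update) (i : nat) : bool := info h i.
Definition isize (h : seq update) (i : nat) : R :=
  if info h i is Some (s, _) then s else 0.
Definition icost (h : seq update) (i : nat) : R :=
  if info h i is Some (_, c) then c else 0.

Definition items (h : seq update) : seq nat :=
  [seq i <- undup (map uid h) | present h i].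

Fixpoint wf_rev (h : seq update) : bool :=
  match h with
  | [::] => true
  | u :: h' => wf_rev h' &&
      match u with Ins i _ _ => ~~ present (rev h') i | Del i => present (rev h') i end
  end.
Definition wf (h : seq update) : bool := wf_rev (rev h).

Definition inputs_ok (P : R -> bool) (h : seq update) : bool :=
  all (fun u => if u is Ins _ s c then P s && (0 <= c) else true) h.

(* A (deterministic, online) algorithm maps the history of updates so far to
   the current packing: an assignment of item identifiers to bin labels. *)
Definition algorithm := seq update -> nat -> nat.

Definition load (h : seq update) (p : nat -> nat) (b : nat) : R :=
  \sum_(i <- items h | p i == b) isize h i.
Definition nitems (h : seq update) (p : nat -> nat) (b : nat) : nat :=
  size [seq i <- items h | p i == b].
Definition used_bins (h : seq update) (p : nat -> nat) : seq nat :=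
  undup (map p (items h)).

Definition feasible (h : seq update) (p : nat -> nat) : Prop :=
  forall b, load h p b <= 1.

Definition move_cost (A : algorithm) (h : seq update) (u : update) : R :=
  \sum_(i <- items h | present (rcons h u) i && (A h i != A (rcons h u) i)) icost h i.

Definition upd_cost (h : seq update) (u : update) : R :=
  match u with Ins _ _ c => c | Del i => icost h i end.

Definition recourse_bounded (A : algorithm) (gamma : R) (P : R -> bool) : Prop :=
  forall h u, wf (rcons h u) -> inputs_ok P (rcons h u) ->
    move_cost A h u <= gamma * upd_cost h u.

Definition packs_all_but_one (A : algorithm) (P : R -> bool) (m : nat) : Prop :=
  forall h, wf h -> inputs_ok P h ->
    feasible h (A h) /\
    (size [seq b <- used_bins h (A h) | nitems h (A h) b != m] <= 1)%N.

Definition size_class (k : nat) (s : R) : bool :=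
  ((k%:R)^-1 <= s) && (s < ((k.-1)%:R)^-1).
Definition size_exact (k : nat) (s : R) : bool := s == (k%:R)^-1.

End BinPacking.

(* Main.v *)
Require Import Defs.
From mathcomp Require Import all_boot all_order all_algebra.
From mathcomp Require Import ring lra zify.
Set Implicit Arguments. Unset Strict Implicit. Unset Printing Implicit Defensive.
Import Order.TTheory GRing.Theory Num.Theory.
Local Open Scope ring_scope.


Section Gen.
Variable R : realFieldType.
Variable c : nat -> R.
Hypothesis c0 : forall i, 0 <= c i.

Definition rr : rel nat := fun a b => c b <= 2 * c a.

Fixpoint ins y s := match s with [::] => [:: y]
  | a :: s' => if 2 * c a < c y then y :: ins a s' else a :: ins y s' end.
Fixpoint carr y s := match s with [::] => [::]
  | a :: s' => if 2 * c a < c y then a :: carr a s' else carr y s' end.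

Lemma perm_ins y s : perm_eq (ins y s) (y :: s).
Proof.
elim: s y => [//|a s IH] y /=; case: ifP => _.
  by rewrite perm_cons IH.
apply/permP => p /=; rewrite (permP (IH y) p) /=; lia.
Qed.

Lemma mem_ins y s : ins y s =i y :: s.
Proof. exact: perm_mem (perm_ins y s). Qed.

Lemma pairwise_ins y s : pairwise rr s -> pairwise rr (ins y s).
Proof.
elim: s y => [//|a s IH] y; rewrite /= => /andP[Ha Hs].
case: ifP => H.
  rewrite pairwise_cons IH // andbT.
  apply/allP => z; rewrite mem_ins inE => /orP[/eqP->|zs].
    rewrite /rr; have := c0 y; lra.
  move/allP: Ha => /(_ z zs); rewrite /rr => Hz; have := c0 y; lra.
rewrite pairwise_cons IH // andbT.
apply/allP => z; rewrite mem_ins inE => /orP[/eqP->|zs].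
  by rewrite /rr; move/negbT: H; rewrite -leNgt.
by move/allP: Ha => /(_ z zs).
Qed.

Lemma carr_sub y s : {subset carr y s <= s}.
Proof.
elim: s y => [//|a s IH] y /= z; case: ifP => _.
  by rewrite !inE => /orP[->//|/IH->]; rewrite orbT.
by move/IH; rewrite inE => ->; rewrite orbT.
Qed.

Lemma carr_uniq y s : uniq s -> uniq (carr y s).
Proof.
elim: s y => [//|a s IH] y /= /andP[a_s us]; case: ifP => _ /=; last exact: IH.
rewrite IH // andbT; apply/negP => /carr_sub; exact/negP.
Qed.

Lemma carr_sum y s : \sum_(i <- carr y s) c i <= c y.
Proof.
elim: s y => [|a s IH] y /=; first by rewrite big_nil.
case: ifP => H; last exact: IH.
rewrite big_cons; have := IH a; lra.
Qed.

Lemma index_ins y s z : uniq (y :: s) -> z \in s -> z \notin carr y s ->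
  index z (ins y s) = index z s.
Proof.
elim: s y => [//|a s IH] y /=; rewrite !inE negb_or => /and3P[/andP[ya ys] a_s us].
case: ifP => _ /=.
- rewrite inE negb_or => /orP[/eqP->|zs] /andP[za zc]; first by rewrite eqxx in za.
  have zy : (y == z) = false by apply/negP => /eqP yz; move: ys; rewrite yz zs.
  rewrite zy eq_sym (negbTE za) IH //=.
  by rewrite a_s us.
- case: (eqVneq a z) => // az /orP[//|zs] zc.
  by rewrite IH //= ys us.
Qed.

Fixpoint hf t : option (nat * seq nat) := match t with [::] => None
  | b :: t' => match hf t' with None => Some (b, [::])
     | Some (y, r) => if 2 * c y < c b then Some (b, y :: r) else Some (y, b :: r) end end.
Definition fill t := if hf t is Some (y, r) then y :: r else [::].
Fixpoint cl t := match t with [::] => [::]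
  | b :: t' => match hf t' with None => [:: b]
     | Some (y, _) => if 2 * c y < c b then b :: cl t' else cl t' end end.

Lemma hf_none t : hf t = None -> t = [::].
Proof. by case: t => //= b t; case: (hf t) => [[]|] //= y r; case: ifP. Qed.

Lemma hf_perm t y r : hf t = Some (y, r) -> perm_eq (y :: r) t.
Proof.
elim: t y r => [//|b t IH] y r /=; case E: (hf t) => [[y' r']|].
  have P := IH _ _ E.
  case: ifP => _ [<- <-]; first by rewrite perm_cons.
  apply/permP => p /=; rewrite -(permP P p) /=; lia.
by move=> [<- <-]; rewrite (hf_none E).
Qed.

Lemma fill_perm t : perm_eq (fill t) t.
Proof.
rewrite /fill; case E: (hf t) => [[y r]|]; first exact: hf_perm E.
by rewrite (hf_none E).
Qed.

Lemma hf_pairwise t y r : pairwise rr t -> hf t = Some (y, r) -> pairwise rr (y :: r).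
Proof.
elim: t y r => [//|b t IH] y r; rewrite pairwise_cons => /andP[Hb Ht] /=.
case E: (hf t) => [[y' r']|]; last by move=> [<- <-].
have P := hf_perm E; have Hp := IH _ _ Ht E.
have Hb' : all (rr b) (y' :: r') by rewrite (perm_all _ P).
case: ifP => H [<- <-].
  by rewrite pairwise_cons Hb'.
move: Hp Hb'; rewrite !pairwise_cons /= => /andP[-> ->] /andP[_ ->].
by rewrite /rr; move/negbT: H; rewrite -leNgt => ->.
Qed.

Lemma fill_pairwise t : pairwise rr t -> pairwise rr (fill t).
Proof.
rewrite /fill; case E: (hf t) => [[y r]|] // H; exact: hf_pairwise H E.
Qed.

Lemma hf_mem t y r : hf t = Some (y, r) -> y \in t.
Proof. move/hf_perm/perm_mem => <-; exact: mem_head. Qed.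

Lemma cl_sub t : {subset cl t <= t}.
Proof.
elim: t => [//|b t IH] /= z; case E: (hf t) => [[y r]|]; last by rewrite inE => /eqP->; rewrite mem_head.
case: ifP => _; first by rewrite !inE => /orP[->//|/IH->]; rewrite orbT.
by move/IH; rewrite inE => ->; rewrite orbT.
Qed.

Lemma cl_uniq t : uniq t -> uniq (cl t).
Proof.
elim: t => [//|b t IH] /= /andP[bt ut]; case E: (hf t) => [[y r]|] //.
case: ifP => _ /=; last exact: IH.
rewrite IH // andbT; apply/negP => /cl_sub; exact/negP.
Qed.

Lemma cl_sum t y r : hf t = Some (y, r) -> \sum_(i <- cl t) c i <= 2 * c y.
Proof.
elim: t y r => [//|b t IH] y r /=; case E: (hf t) => [[y' r']|].
  have := IH _ _ E; case: ifP => H Sq [<- _] //.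
  rewrite big_cons; lra.
by move=> [<- _]; rewrite big_cons big_nil; have := c0 b; lra.
Qed.

Lemma index_fill t z : uniq t -> z \in t -> z \notin cl t ->
  index z (fill t) = (index z t).+1.
Proof.
rewrite /fill.
elim: t => [//|b t IH] /= /andP[bt ut]; case E: (hf t) => [[y' r']|].
- have := IH ut; rewrite E => IH'.
  have yt : y' \in t by exact: hf_mem E.
  case: ifP => _ /=.
  + rewrite inE => /orP[/eqP->|zt]; first by rewrite inE eqxx.
    rewrite inE negb_or => /andP[bz zc].
    have := IH' zt zc => /= ->.
    by rewrite eq_sym (negbTE bz).
  + rewrite inE => /orP[/eqP->|zt] zc.
      have -> : (y' == b) = false by apply/negP => /eqP yb; move: bt; rewrite -yb yt.
      by rewrite eqxx.
    have := IH' zt zc => /=; case: (eqVneq y' z) => // yz [->].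
    have -> : (b == z) = false by apply/negP => /eqP bz; move: bt; rewrite bz zt.
    by [].
- by rewrite (hf_none E) => H; rewrite H.
Qed.

End Gen.



Section Algo.
Variable R : realFieldType.

Lemma info_rcons (h : seq (update R)) u i : info (rcons h u) i =
  match u with Ins j s c => if j == i then Some (s, c) else info h i
             | Del j => if j == i then None else info h i end.
Proof. by rewrite /info foldl_rcons. Qed.

Lemma present_rcons (h : seq (update R)) u i : present (rcons h u) i =
  match u with Ins j _ _ => (j == i) || present h i
             | Del j => (j != i) && present h i end.
Proof. by rewrite /present info_rcons; case: u => [j s c|j]; case: eqP. Qed.

Lemma icost_rcons (h : seq (update R)) u i : uid u != i -> icost (rcons h u) i = icost h i.
Proof. by rewrite /icost info_rcons; case: u => [j s c|j] /= /negbTE ->. Qed.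

Lemma info_ok (P : pred R) (h : seq (update R)) i s c :
  inputs_ok P h -> info h i = Some (s, c) -> P s && (0 <= c).
Proof.
elim/last_ind: h => [//|h u IH]; rewrite /inputs_ok all_rcons => /andP[Hu Hh].
move: IH => /(_ Hh) IH.
rewrite info_rcons; case: u Hu => [j s' c'|j] /=; case: eqP => _ //; try by move=> _.
by move=> H [<- <-].
Qed.

Lemma icost_ge0 (P : pred R) (h : seq (update R)) i : inputs_ok P h -> 0 <= icost h i.
Proof.
rewrite /icost; case E: (info h i) => [[s c]|] H //.
by case/andP: (info_ok H E).
Qed.

Lemma info_uid (h : seq (update R)) i : present h i -> i \in map (@uid R) h.
Proof.
elim/last_ind: h => [//|h u IH]; rewrite present_rcons map_rcons mem_rcons inE.
case: u => [j s c|j] /=.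
  by case/orP => [/eqP->|/IH->]; rewrite ?eqxx ?orbT.
by case/andP => _ /IH ->; rewrite orbT.
Qed.

Lemma wf_rcons (h : seq (update R)) u : wf (rcons h u) = wf h &&
  match u with Ins i _ _ => ~~ present h i | Del i => present h i end.
Proof. by rewrite /wf rev_rcons /= revK. Qed.

Lemma mem_items (h : seq (update R)) i : (i \in items h) = present h i.
Proof.
rewrite /items mem_filter mem_undup; case P: (present h i) => //=.
exact: info_uid.
Qed.

Lemma uniq_items (h : seq (update R)) : uniq (items h).
Proof. exact/filter_uniq/undup_uniq. Qed.

Definition next (h : seq (update R)) (s : seq nat) (u : update R) : seq nat :=
  match u with
  | Ins i _ _ => ins (icost (rcons h u)) i s
  | Del i => take (index i s) s ++ fill (icost h) (drop (index i s).+1 s)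
  end.

Fixpoint st (rh : seq (update R)) : seq nat :=
  match rh with [::] => [::] | u :: rh' => next (rev rh') (st rh') u end.
Definition Sq h := st (rev h).

Lemma S_rcons h u : Sq (rcons h u) = next h (Sq h) u.
Proof. by rewrite /Sq rev_rcons /= revK. Qed.

Definition algo (m : nat) : algorithm R := fun h i => (index i (Sq h) %/ m)%N.

Definition Inv (h : seq (update R)) s :=
  [/\ uniq s, forall i, (i \in s) = present h i & pairwise (rr (icost h)) s].

Lemma pairwise_transfer (c c' : nat -> R) s :
  pairwise (rr c) s -> {in s, c =1 c'} -> pairwise (rr c') s.
Proof.
move=> H E; apply: (sub_in_pairwise (P := mem s)) H; last exact: allss.
by move=> a b ai bi; rewrite /rr -!E.
Qed.

Lemma split_at (j : nat) s : j \in s ->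
  s = take (index j s) s ++ j :: drop (index j s).+1 s.
Proof.
move=> js; rewrite -{1}(cat_take_drop (index j s) s) (drop_nth j) ?index_mem //.
by rewrite nth_index.
Qed.

Lemma Inv_next P h u s : wf (rcons h u) -> inputs_ok P (rcons h u) -> Inv h s ->
  Inv (rcons h u) (next h s u).
Proof.
rewrite wf_rcons => /andP[_ Hu] Hok [us ms ps].
have c0 := fun i => icost_ge0 i Hok.
have c0h : forall i, 0 <= icost h i.
  by move: Hok; rewrite /inputs_ok all_rcons => /andP[_ H] i; exact: (icost_ge0 i H).
case: u Hu Hok c0 => [j sz cj|j] /= Hu Hok c0.
- have js : j \notin s by rewrite ms.
  split.
  + by rewrite (perm_uniq (perm_ins _ _ _)) /= js.
  + by move=> i; rewrite mem_ins present_rcons inE ms eq_sym.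
  + apply: pairwise_ins => //; apply: pairwise_transfer ps _ => i i_s.
    rewrite icost_rcons //=; apply/negP => /eqP ji; by move: js; rewrite ji i_s.
- have js : j \in s by rewrite ms.
  move: us ms ps; rewrite {1 2 3}(split_at js).
  set pre := take _ _; set t := drop _ _ => us ms ps.
  move: us; rewrite cat_uniq /= negb_or => /and4P[upre /andP[jpre hpt] jt ut].
  have fp := fill_perm (icost h) t.
  have memE i : (i \in pre ++ fill (icost h) t) = (i \in pre ++ t).
    by rewrite !mem_cat (perm_mem fp).
  split.
  + rewrite cat_uniq upre (perm_uniq fp) ut andbT /=.
    apply/hasP => -[x xf xpre]; move/negP: hpt; apply; apply/hasP; exists x => //.
    by rewrite -(perm_mem fp).
  + move=> i; rewrite memE present_rcons -ms !mem_cat inE.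
    case: (eqVneq j i) => [<-|ji] //=.
    by rewrite (negbTE jt) orbF; apply/negbTE.
  + apply: (@pairwise_transfer (icost h)).
      move: ps; rewrite !pairwise_cat pairwise_cons => /and3P[Ha -> /andP[Hjt Pt]] /=.
      rewrite fill_pairwise //= andbT.
      erewrite eq_allrel_memr; last exact: perm_mem fp.
      by move: Ha; rewrite allrel_consr => /andP[].
    move=> i; rewrite memE => ii; rewrite icost_rcons //=.
    by apply/negP => /eqP ji; move: ii; rewrite -ji mem_cat (negbTE jpre) (negbTE jt).
Qed.

Lemma Inv_S P h : wf h -> inputs_ok P h -> Inv h (Sq h).
Proof.
elim/last_ind: h => [|h u IH] Hw Ho; first by split => // i; rewrite /present.
rewrite S_rcons; apply (Inv_next Hw Ho); apply: IH.
  by move: Hw; rewrite wf_rcons => /andP[].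
by move: Ho; rewrite /inputs_ok all_rcons => /andP[].
Qed.

End Algo.



Section Rec.
Variable R : realFieldType.

Lemma sum_sub (f : nat -> R) (P : pred nat) r L : uniq r -> uniq L ->
  (forall i, 0 <= f i) -> (forall i, i \in r -> P i -> i \in L) ->
  \sum_(i <- r | P i) f i <= \sum_(i <- L) f i.
Proof.
move=> ur uL f0 sub; rewrite -big_filter; set r' := filter P r.
rewrite [X in _ <= X](bigID (mem r')) /=.
have -> : \sum_(i <- L | i \in r') f i = \sum_(i <- r') f i.
  rewrite -big_filter; apply: perm_big; apply: uniq_perm.
  - exact: filter_uniq.
  - exact: filter_uniq.
  move=> i; rewrite mem_filter; case ir: (i \in r') => //=.
  by move: ir; rewrite mem_filter => /andP[Pi ir]; apply: sub.
have := @sumr_ge0 R _ L (fun i => i \notin r') f (fun i _ => f0 i); lra.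
Qed.

Lemma wf_inputs_prefix P (h : seq (update R)) u :
  wf (rcons h u) -> inputs_ok P (rcons h u) -> wf h /\ inputs_ok P h.
Proof.
rewrite wf_rcons /inputs_ok all_rcons => /andP[-> _] /andP[_ ->] //.
Qed.

Lemma algo_recourse m P : recourse_bounded (@algo R m) 4 P.
Proof.
move=> h u Hw Ho.
have [Hwh Hoh] := wf_inputs_prefix Hw Ho.
have [us ms ps] := Inv_S Hwh Hoh.
have c0 := fun i => icost_ge0 i Ho.
have c0h := fun i => icost_ge0 i Hoh.
rewrite /move_cost /algo S_rcons.
move: Hw; rewrite wf_rcons => /andP[_ Hu].
case: u Hu Ho c0 => [j sz cj|j] /= Hu Ho c0.
- set c' := icost (rcons h (Ins j sz cj)).
  have js : j \notin Sq h by rewrite ms.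
  have cjE : c' j = cj by rewrite /c' /icost info_rcons eqxx.
  apply: (@le_trans _ _ (\sum_(i <- carr c' j (Sq h)) icost h i)).
    apply: sum_sub => //; first exact: uniq_items.
    + exact: carr_uniq.
    move=> i ii /andP[pi ne]; apply/negPn/negP => nc; move/negP: ne; apply.
    have iS : i \in Sq h by rewrite ms -mem_items.
    by rewrite index_ins //= js.
  rewrite (eq_big_seq c'); last first.
    move=> i /carr_sub iS; rewrite /c' icost_rcons //=.
    by apply/negP => /eqP ji; move: js; rewrite ji iS.
  have := carr_sum c0 j (Sq h); rewrite -/c' cjE.
  have := c0 j; rewrite -/c' cjE; lra.
- have js : j \in Sq h by rewrite ms.
  have Es := split_at js.
  set pre := take _ _ in Es *; set t := drop _ _ in Es *.
  have ut : uniq t by move: us; rewrite Es cat_uniq => /and3P[_ _ /andP[]].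
  have jt : j \notin t by move: us; rewrite Es cat_uniq => /and3P[_ _ /andP[]].
  have key : forall i, i \in Sq h -> j != i -> i \notin cl (icost h) t ->
      index i (pre ++ fill (icost h) t) = index i (Sq h).
    move=> i iS ji nc; rewrite [in RHS]Es !index_cat /=; case: ifP => // ipre.
    rewrite (negbTE ji) index_fill //.
    by move: iS; rewrite Es mem_cat ipre inE eq_sym (negbTE ji).
  apply: (@le_trans _ _ (\sum_(i <- cl (icost h) t) icost h i)).
    apply: sum_sub => //; first exact: uniq_items.
    + exact: cl_uniq.
    move=> i ii; rewrite present_rcons => /andP[/andP[ji pi] ne]; apply/negPn/negP => nc; move/negP: ne; apply.
    have iS : i \in Sq h by rewrite ms -mem_items.
    by rewrite key.
  case E: (hf (icost h) t) => [[y r]|].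
    have := cl_sum c0h E.
    have yt := hf_mem E.
    have : rr (icost h) j y.
      move: ps; rewrite Es pairwise_cat pairwise_cons => /and3P[_ _ /andP[/allP H _]].
      exact: H.
    rewrite /rr; have := c0h j; lra.
  rewrite (hf_none E) /= big_nil; have := c0h j; lra.
Qed.

End Rec.



Lemma map_index_iota (s : seq nat) : uniq s -> map (index^~ s) s = iota 0 (size s).
Proof.
elim: s => [//|a s IH] /= /andP[a_s us]; rewrite eqxx; congr (_ :: _).
rewrite -[1%N]/(1 + 0)%N iotaDl -IH // -map_comp; apply/eq_in_map => x xs /=.
have -> : (a == x) = false by apply/negP => /eqP ax; move: a_s; rewrite ax xs.
by rewrite add1n.
Qed.

Lemma count_iota_le (m n b : nat) : (0 < m)%N ->
  (count (fun k => k %/ m == b) (iota 0 n) <= m)%N.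
Proof.
move=> m0; rewrite -size_filter.
rewrite -{2}(size_iota (b * m) m).
apply: uniq_leq_size; first exact/filter_uniq/iota_uniq.
move=> k; rewrite mem_filter mem_iota => /andP[/eqP kb _].
have := divn_eq k m; have := ltn_pmod k m0; rewrite kb => H1 H2.
rewrite mem_iota; apply/andP; split; lia.
Qed.

Lemma count_iota_eq (m n b : nat) : (0 < m)%N -> (b.+1 * m <= n)%N ->
  count (fun k => (k %/ m)%N == b) (iota 0 n) = m.
Proof.
move=> m0 bn.
have -> : n = (b * m + m + (n - b.+1 * m))%N by rewrite mulSn; lia.
rewrite !iotaD !count_cat /=.
rewrite (@eq_in_count _ _ pred0); last first.
  move=> k; rewrite mem_iota add0n => /andP[_ kb] /=.
  apply/negbTE; rewrite neq_ltn; apply/orP; left; by rewrite ltn_divLR.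
rewrite count_pred0 add0n.
rewrite (@eq_in_count _ _ predT (iota (0 + b * m) m)); last first.
  move=> k; rewrite mem_iota add0n => /andP[k1 k2] /=.
  rewrite eqn_leq leq_divRL // k1 andbT -ltnS ltn_divLR // mulSn; lia.
rewrite count_predT size_iota.
rewrite (@eq_in_count _ _ pred0); last first.
  move=> k; rewrite mem_iota add0n => /andP[k1 _] /=.
  apply/negbTE; rewrite neq_ltn; apply/orP; right.
  by rewrite leq_divRL // mulSn; lia.
by rewrite count_pred0 addn0.
Qed.

Section Packs.
Variable R : realFieldType.

Lemma sum_le_count (f : nat -> R) (P : pred nat) r C :
  (forall i, i \in r -> P i -> f i <= C) ->
  \sum_(i <- r | P i) f i <= C *+ count P r.
Proof.
elim: r => [|a r IH] H; first by rewrite big_nil.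
rewrite big_cons /=; case: ifP => Pa.
  rewrite add1n mulrS lerD //; first by apply: H; rewrite ?mem_head.
  by apply: IH => i ir; apply: H; rewrite inE ir orbT.
by rewrite add0n; apply: IH => i ir; apply: H; rewrite inE ir orbT.
Qed.

Lemma algo_packs (P : pred R) (m : nat) (C : R) : (0 < m)%N ->
  (forall s, P s -> s <= C) -> 0 <= C -> C *+ m <= 1 ->
  packs_all_but_one (@algo R m) P m.
Proof.
move=> m0 PC C0 Cm h Hw Ho.
have [us ms ps] := Inv_S Hw Ho.
set s := Sq h in us ms ps *.
have pe : perm_eq (items h) s.
  by apply: uniq_perm => //; [exact: uniq_items | move=> i; rewrite ms mem_items].
have cnt : forall b, count (fun i => algo m h i == b) (items h) =
                     count (fun k => (k %/ m)%N == b) (iota 0 (size s)).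
  move=> b; rewrite (permP pe) -(map_index_iota us) count_map.
  by apply: eq_count.
split.
- move=> b; rewrite /load.
  apply: (@le_trans _ _ (C *+ count (fun i => algo m h i == b) (items h))).
    apply: sum_le_count =>  i ii _; rewrite /isize; move: ii; rewrite mem_items /present.
    case E: (info h i) => [[sz c]|] // _.
    by case/andP: (info_ok Ho E) => /PC.
  rewrite cnt; apply: le_trans Cm; apply: ler_wpMn2l => //.
  exact: count_iota_le.
- set n := size s.
  apply: (@leq_trans (size [:: n %/ m])%N) => //.
  apply: uniq_leq_size; first exact/filter_uniq/undup_uniq.
  move=> b; rewrite mem_filter mem_undup => /andP[nb /mapP[i ii bE]]; subst b.
  rewrite inE; move: nb; rewrite /nitems size_filter cnt.
  set b' := algo m h i.
  have iS : i \in s by rewrite ms -mem_items.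
  have lt : (index i s < n)%N by rewrite index_mem.
  have b1 : (b' <= n %/ m)%N by apply: leq_div2r; exact: ltnW.
  case: (ltnP b' (n %/ m)) => H.
    by rewrite count_iota_eq ?eqxx // -leq_divRL.
  by move=> _; apply/eqP/anti_leq; rewrite b1 H.
Qed.

End Packs.

Theorem lemma3p3 (R : realFieldType) :
  exists gamma : R,
    (forall k : nat, (2 <= k)%N ->
       exists A : algorithm R,
         recourse_bounded A gamma (size_class k) /\
         packs_all_but_one A (size_class k) k.-1) /\
    (forall k : nat, (1 <= k)%N ->
       exists A : algorithm R,
         recourse_bounded A gamma (size_exact k) /\
         packs_all_but_one A (size_exact k) k).
Proof.
exists 4; split => k k2.
- exists (@algo R k.-1); split; first exact: algo_recourse.
  apply: (@algo_packs R _ _ ((k.-1)%:R)^-1).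
  + lia.
  + by move=> s /andP[_ H]; apply: ltW.
  + by rewrite invr_ge0 ler0n.
  + rewrite -(mulr_natr ((k.-1)%:R)^-1) mulVf // pnatr_eq0; apply/eqP; lia.
- exists (@algo R k); split; first exact: algo_recourse.
  apply: (@algo_packs R _ _ (k%:R)^-1).
  + lia.
  + by move=> s /eqP->.
  + by rewrite invr_ge0 ler0n.
  + rewrite -(mulr_natr (k%:R)^-1) mulVf // pnatr_eq0; apply/eqP; lia.
Qed.
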